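(* Let $S\subseteq\{0,1,\dots,\omega\}$ be finite. (i) $A\vdash_{\mathbf{RC}_S}B$ iff $A\vdash B$ is true in all finite RC$_S$-models. (ii) $A\vdash_{\mathbf{RC\omega}_S}B$ iff $A\vdash B$ is true in all finite persistent RC$_S$-models.
   Context: Strictly positive formulas: $A::= p\mid \top\mid (A\land B)\mid \alpha A$, $\alpha\le\omega$; for a signature $S$, ${\mathcal L}_S$ is the set of such formulas using only modalities from $S$, and $L_S$ is the logic $L$ with axioms and rules restricted to ${\mathcal L}_S$. $\mathbf{RJ}$: $A\vdash A$; $A\vdash\top$; cut; $A\land B\vdash A$; $A\land B\vdash B$; from $A\vdash B$, $A\vdash C$ infer $A\vdash B\land C$; from $A\vdash B$ infer $\alpha A\vdash\alpha B$; $\alpha\alpha A\vdash\alpha A$; $\alpha\beta A\vdash\beta A$, $\beta\alpha A\vdash\beta A$ for $\alpha\ge\beta$; $\alpha A\land\beta B\vdash\alpha(A\land\beta B)$ for $\alpha>\beta$. $\mathbf{RC}=\mathbf{RJ}+\{\alpha A\vdash\beta A:\alpha>\beta\}$; $\mathbf{RC\omega}=\mathbf{RC}+\{\omega A\vdash A\}$. Kripke model for $S$: nonempty $W$, relations $(R_\alpha)_{\alpha\in S}$, valuation; $x\Vdash\alpha A$ iff $\exists y(xR_\alpha y\wedge y\Vdash A)$, with usual clauses for $\top,\land$. RC$_S$-frame: for all $\alpha,\beta\in S$, $R_\alpha R_\beta\subseteq R_{\min(\alpha,\beta)}$; for $\alpha>\beta$, $xR_\alpha y\wedge xR_\beta z\Rightarrow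 yR_\beta z$; and $R_\alpha\subseteq R_\beta$ for $\beta<\alpha$. Persistent: $x\Vdash p$ and $yR_\omega x$ imply $y\Vdash p$ (if $\omega\in S$). Finite model: $W$ finite. A sequent is true in a model if it holds at every node. *)

(* Defs.v *)
From Stdlib Require Import List Arith.
Import ListNotations.

(* Modalities: ordinals alpha <= omega. *)
Inductive modal : Type := Fin (n : nat) | Omega.

Definition mlt (a b : modal) : Prop :=
  match a, b with
  | Fin m, Fin n => m < n
  | Fin _, Omega => True
  | Omega, _ => False
  end.

Definition mle (a b : modal) : Prop := mlt a b \/ a = b.

Definition mmin (a b : modal) : modal :=
  match a, b with
  | Fin m, Fin n => Fin (Nat.min m n)
  | Fin m, Omega => Fin m
  | Omega, b => b
  end.

(* Strictly positive formulas, propositional variables indexed by nat. *)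
Inductive formula : Type :=
  | Var (p : nat)
  | Top
  | And (A B : formula)
  | Dia (a : modal) (A : formula).

(* A signature S is a finite set of modalities, given as a list. *)
Fixpoint inL (S : list modal) (A : formula) : Prop :=
  match A with
  | Var _ | Top => True
  | And A B => inL S A /\ inL S B
  | Dia a A => In a S /\ inL S A
  end.

(* L_S, with L = RC (w = false) or RCω (w = true); axioms and rules
   restricted to formulas of L_S: every sequent occurring in a derivation
   consists of formulas of L_S. *)
Inductive derives (w : bool) (S : list modal) : formula -> formula -> Prop :=
  | d_refl A : inL S A -> derives w S A A
  | d_top A : inL S A -> derives w S A Top
  | d_cut A B C : derives w S A B -> derives w S B C -> derives w S A C
  | d_andl A B : inL S (And A B) -> derives w S (And A B) A
  | d_andr A B : inL S (And A B) -> derives w S (And A B) B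
  | d_andI A B C : derives w S A B -> derives w S A C -> derives w S A (And B C)
  | d_mon a A B : In a S -> derives w S A B -> derives w S (Dia a A) (Dia a B)
  | d_trans a A : inL S (Dia a (Dia a A)) -> derives w S (Dia a (Dia a A)) (Dia a A)
  | d_ab a b A : mle b a -> inL S (Dia a (Dia b A)) ->
      derives w S (Dia a (Dia b A)) (Dia b A)
  | d_ba a b A : mle b a -> inL S (Dia b (Dia a A)) ->
      derives w S (Dia b (Dia a A)) (Dia b A)
  | d_J a b A B : mlt b a -> inL S (And (Dia a A) (Dia b B)) ->
      derives w S (And (Dia a A) (Dia b B)) (Dia a (And A (Dia b B)))
  | d_RC a b A : mlt b a -> inL S (Dia a A) -> In b S ->
      derives w S (Dia a A) (Dia b A)
  | d_omega A : w = true -> inL S (Dia Omega A) -> derives w S (Dia Omega A) A.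

Fixpoint forces {W : Type} (R : modal -> W -> W -> Prop) (V : nat -> W -> Prop)
    (x : W) (A : formula) : Prop :=
  match A with
  | Var p => V p x
  | Top => True
  | And A B => forces R V x A /\ forces R V x B
  | Dia a A => exists y, R a x y /\ forces R V y A
  end.

Definition RC_frame {W : Type} (S : list modal) (R : modal -> W -> W -> Prop) : Prop :=
  (forall a b, In a S -> In b S ->
     forall x y z, R a x y -> R b y z -> R (mmin a b) x z) /\
  (forall a b, In a S -> In b S -> mlt b a ->
     forall x y z, R a x y -> R b x z -> R b y z) /\
  (forall a b, In a S -> In b S -> mlt b a ->
     forall x y, R a x y -> R b x y).

Definition persistent {W : Type} (S : list modal) (R : modal -> W -> W -> Prop)
    (V : nat -> W -> Prop) : Prop :=
  In Omega S -> forall p x y, V p x -> R Omega y x -> V p y.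

Definition finite_type (W : Type) : Prop := exists l : list W, forall x : W, In x l.

Definition true_in {W : Type} (R : modal -> W -> W -> Prop) (V : nat -> W -> Prop)
    (A B : formula) : Prop :=
  forall x, forces R V x A -> forces R V x B.

Definition valid_finite_RC (pers : bool) (S : list modal) (A B : formula) : Prop :=
  forall (W : Type) (R : modal -> W -> W -> Prop) (V : nat -> W -> Prop),
    inhabited W -> finite_type W -> RC_frame S R ->
    (pers = true -> persistent S R V) ->
    true_in R V A B.

(* Main.v *)
Require Import Defs.
From Stdlib Require Import List.
From Stdlib Require Import Arith Lia Classical Eqdep_dec.
Import ListNotations.

Lemma derives_inL w S A B : derives w S A B -> inL S A /\ inL S B.
Proof. induction 1; simpl in *; subst; tauto. Qed.

Ltac mdes := repeat match goal with m : modal |- _ => destruct m end;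
  unfold mle, mlt, mmin in *; simpl in *.

Lemma mle_fin m n : m <= n -> mle (Fin m) (Fin n).
Proof. intros H. destruct (Nat.eq_dec m n); [right; congruence| left; simpl; lia]. Qed.

Lemma mlt_trans a b c : mlt a b -> mlt b c -> mlt a c.
Proof. mdes; intros; try lia; tauto. Qed.

Lemma mle_mlt_trans a b c : mle a b -> mlt b c -> mlt a c.
Proof. intros [H|H] H2; [eapply mlt_trans; eauto | subst; auto]. Qed.

Lemma mlt_mle_trans a b c : mlt a b -> mle b c -> mlt a c.
Proof. intros H [H2|H2]; [eapply mlt_trans; eauto | subst; auto]. Qed.

Lemma mle_trans a b c : mle a b -> mle b c -> mle a c.
Proof. intros [H|H] H2; [left; eapply mlt_mle_trans; eauto | subst; auto]. Qed.

Lemma mle_mmin_l a b : mle (mmin a b) a.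
Proof. destruct a as [m|], b as [n|]; simpl.
  - apply mle_fin; lia.
  - right; reflexivity.
  - left; exact I.
  - right; reflexivity. Qed.

Lemma mle_mmin_r a b : mle (mmin a b) b.
Proof. destruct a as [m|], b as [n|]; simpl.
  - apply mle_fin; lia.
  - left; exact I.
  - right; reflexivity.
  - right; reflexivity. Qed.

Lemma mmin_omega a b : mmin a b = Omega -> a = Omega /\ b = Omega.
Proof. destruct a, b; simpl; intros H; try discriminate; auto. Qed.

Lemma mmin_le a b : mle b a -> mmin a b = b /\ mmin b a = b.
Proof.
  destruct a as [m|], b as [n|]; unfold mle, mlt; intros [H|H]; try discriminate;
  try contradiction; try (injection H as H; subst); simpl;
  try (split; f_equal; lia); try (split; reflexivity).
Qed.

Lemma pers_forces {W : Type} S (R : modal -> W -> W -> Prop) V :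
  RC_frame S R -> persistent S R V -> In Omega S ->
  forall A, inL S A -> forall x y, R Omega x y -> forces R V y A -> forces R V x A.
Proof.
  intros Hfr Hp HO A. induction A; simpl; intros HA x y Rxy Hy.
  - eapply Hp; eauto.
  - exact I.
  - destruct HA, Hy; split; eauto.
  - destruct HA as [Ha HA]. destruct Hy as [z [Ryz Hz]]. exists z; split; auto.
    replace a with (mmin Omega a) by (destruct a; reflexivity).
    eapply (proj1 Hfr); eauto.
Qed.

Lemma soundness w S A B : derives w S A B -> valid_finite_RC w S A B.
Proof.
  unfold valid_finite_RC, true_in; intros D W R V _ _ Hfr Hp.
  destruct Hfr as [F1 [F2 F3]].
  induction D; intros x Hx; simpl in *.
  - exact Hx.
  - exact I.
  - eauto.
  - tauto.
  - tauto.
  - split; auto.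
  - destruct Hx as [y [Rxy Hy]]; exists y; auto.
  - destruct H as [Ha _]. destruct Hx as [y [Rxy [z [Ryz Hz]]]]. exists z; split; auto.
    destruct (mmin_le a a (or_intror eq_refl)) as [E _]. rewrite <- E. eapply F1; eauto.
  - destruct H0 as [Ha [Hb _]]. destruct Hx as [y [Rxy [z [Ryz Hz]]]]. exists z; split; auto.
    destruct (mmin_le a b H) as [E _]. rewrite <- E. eapply F1; eauto.
  - destruct H0 as [Hb [Ha _]]. destruct Hx as [y [Rxy [z [Ryz Hz]]]]. exists z; split; auto.
    destruct (mmin_le a b H) as [_ E]. rewrite <- E. eapply F1; eauto.
  - destruct H0 as [[Ha _] [Hb _]]. destruct Hx as [[y [Rxy Hy]] [z [Rxz Hz]]].
    exists y; split; [exact Rxy|]; split; [exact Hy|]. exists z; split; [|exact Hz].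
    exact (F2 a b Ha Hb H x y z Rxy Rxz).
  - destruct H0 as [Ha _]. destruct Hx as [y [Rxy Hy]]. exists y; split; auto. exact (F3 a b Ha H1 H x y Rxy).
  - subst. destruct H0 as [HO HA]. destruct Hx as [y [Rxy Hy]].
    eapply pers_forces with (R := R); eauto. split; auto.
Qed.

Fixpoint sub (A : formula) : list formula :=
  A :: match A with
       | And B C => sub B ++ sub C
       | Dia _ B => sub B
       | _ => []
       end.

Lemma sub_refl A : In A (sub A).
Proof. destruct A; simpl; auto. Qed.

Lemma sub_trans A u : In u (sub A) -> incl (sub u) (sub A).
Proof.
  induction A; intros Hu; destruct Hu as [Hu|Hu];
    try (subst; intros v Hv; exact Hv); simpl in Hu; try contradiction.
  - apply in_app_or in Hu. intros v Hv. simpl. right. apply in_or_app.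
    destruct Hu as [Hu|Hu]; [left; apply IHA1 | right; apply IHA2]; auto.
  - intros v Hv. simpl. right. apply IHA; auto.
Qed.

Lemma sub_inL S A u : inL S A -> In u (sub A) -> inL S u.
Proof.
  induction A; simpl; intros HA [Hu|Hu]; subst; auto; try contradiction.
  - destruct HA. apply in_app_or in Hu; destruct Hu; auto.
  - destruct HA; auto.
Qed.

Definition closed_prop (sig : list formula) (u : formula) : Prop :=
  match u with And C D => In C sig /\ In D sig | Dia _ C => In C sig | _ => True end.

Lemma sub_closed A u : In u (sub A) -> closed_prop (sub A) u.
Proof.
  intros Hu. pose proof (sub_trans A u Hu) as Hi.
  destruct u; simpl; auto.
  - split; apply Hi; simpl; right; apply in_or_app; [left|right]; apply sub_refl.
  - apply Hi; simpl; right; apply sub_refl.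
Qed.

Fixpoint set_of (l : list formula) (t : list bool) : list formula :=
  match l, t with
  | x :: l', b :: t' => if b then x :: set_of l' t' else set_of l' t'
  | _, _ => []
  end.

Lemma set_of_incl l t u : In u (set_of l t) -> In u l.
Proof.
  revert t; induction l as [|x l IH]; intros [|b t]; simpl; try tauto.
  destruct b; simpl; intros H; [destruct H; auto; right; eauto | right; eauto].
Qed.

Lemma exists_set (l : list formula) (P : formula -> Prop) :
  exists t, length t = length l /\ forall u, In u (set_of l t) <-> (In u l /\ P u).
Proof.
  induction l as [|x l IH].
  - exists []; simpl; split; auto; tauto.
  - destruct IH as [t [Ht Hu]]. destruct (classic (P x)) as [Hx|Hx].
    + exists (true :: t); simpl; split; [congruence|]. intros u; simpl; rewrite Hu.
      split; [intros [<-|H]; tauto | intros [[<-|H] HP]; tauto].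
    + exists (false :: t); simpl; split; [congruence|]. intros u; rewrite Hu.
      split; [tauto | intros [[<-|H] HP]; tauto].
Qed.

Fixpoint blists (n : nat) : list (list bool) :=
  match n with
  | 0 => [[]]
  | S n => flat_map (fun l => [true :: l; false :: l]) (blists n)
  end.

Lemma blists_complete t : In t (blists (length t)).
Proof.
  induction t as [|b t IH]; simpl; auto.
  apply in_flat_map. exists t; split; auto. destruct b; simpl; auto.
Qed.

Definition Wt (sig : list formula) := {t : list bool | length t = length sig}.

Lemma Wt_finite sig : finite_type (Wt sig).
Proof.
  exists (flat_map (fun t => match Nat.eq_dec (length t) (length sig) with
                             | left H => [exist _ t H] | right _ => [] end)
                   (blists (length sig))).
  intros [t H]. apply in_flat_map. exists t. split.
  - rewrite <- H; apply blists_complete.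
  - destruct (Nat.eq_dec (length t) (length sig)) as [H'|H']; [|contradiction].
    left. f_equal. apply UIP_dec, Nat.eq_dec.
Qed.

Definition mem (sig : list formula) (T : Wt sig) (u : formula) : Prop :=
  In u (set_of sig (proj1_sig T)).

Definition good w S sig (T : Wt sig) : Prop :=
  exists psi, inL S psi /\ forall u, In u sig -> (mem sig T u <-> derives w S psi u).

Definition Rel w S sig (a : modal) (T U : Wt sig) : Prop :=
  good w S sig T /\ good w S sig U /\
  (forall c C, mle c a -> In (Dia c C) sig ->
     (mem sig U C \/ mem sig U (Dia c C)) -> mem sig T (Dia c C)) /\
  (forall c C, mlt c a -> mem sig T (Dia c C) -> mem sig U (Dia c C)) /\
  (w = true -> a = Omega -> forall p, mem sig U (Var p) -> mem sig T (Var p)).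

Definition Val sig (p : nat) (T : Wt sig) : Prop := mem sig T (Var p).

Lemma mem_in sig T u : mem sig T u -> In u sig.
Proof. apply set_of_incl. Qed.

Lemma frame w S sig : RC_frame S (Rel w S sig).
Proof.
  split; [|split].
  - intros a b _ _ x y z [gx [gy [A1 [B1 O1]]]] [_ [gz [A2 [B2 O2]]]].
    repeat split; auto.
    + intros c C Hle Hin Hm. apply A1; auto.
      * eapply mle_trans; [exact Hle| apply mle_mmin_l].
      * right. apply A2; auto. eapply mle_trans; [exact Hle| apply mle_mmin_r].
    + intros c C Hlt Hm. apply B2; [eapply mlt_mle_trans; [exact Hlt|apply mle_mmin_r]|].
      apply B1; auto. eapply mlt_mle_trans; [exact Hlt|apply mle_mmin_l].
    + intros Hw Ho p Hp. destruct (mmin_omega _ _ Ho) as [-> ->]. auto.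
  - intros a b _ _ Hba x y z [gx [gy [A1 [B1 O1]]]] [_ [gz [A2 [B2 O2]]]].
    repeat split; auto.
    + intros c C Hle Hin Hm. apply B1; [eapply mle_mlt_trans; eauto|]. apply A2; auto.
    + intros c C Hlt Hm. apply B2; auto. apply A1; auto.
      * left; eapply mlt_trans; eauto.
      * eapply mem_in; eauto.
    + intros _ Ho. subst. simpl in Hba. contradiction.
  - intros a b _ _ Hba x y [gx [gy [A1 [B1 O1]]]]. repeat split; auto.
    + intros c C Hle Hin Hm. apply A1; auto. eapply mle_trans; [exact Hle| left; exact Hba].
    + intros c C Hlt Hm. apply B1; auto. eapply mlt_trans; eauto.
    + intros _ Ho. subst. simpl in Hba. contradiction.
Qed.

Fixpoint big_and (l : list formula) : formula :=
  match l with [] => Top | x :: l => And x (big_and l) end.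

Lemma inL_big_and S l : (forall x, In x l -> inL S x) -> inL S (big_and l).
Proof. induction l; simpl; auto. Qed.

Lemma big_and_mem w S l x : inL S (big_and l) -> In x l -> derives w S (big_and l) x.
Proof.
  induction l as [|y l IH]; simpl; [tauto|]. intros HL [<-|Hx].
  - apply d_andl; simpl; auto.
  - apply d_cut with (big_and l); [apply d_andr; simpl; auto | apply IH; tauto].
Qed.

Lemma jstar w S psi a C L :
  derives w S psi (Dia a C) ->
  (forall x, In x L -> derives w S psi x /\ exists c D, x = Dia c D /\ mlt c a) ->
  derives w S psi (Dia a (And C (big_and L))).
Proof.
  induction L as [|x L IH]; intros H HL.
  - destruct (derives_inL _ _ _ _ H) as [Hp [Ha HC]].
    apply d_cut with (Dia a C); auto. apply d_mon; auto.
    apply d_andI; [apply d_refl | apply d_top]; auto.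
  - destruct (HL x (or_introl eq_refl)) as [Hx [c [D [-> Hlt]]]].
    pose proof (IH H (fun y Hy => HL y (or_intror Hy))) as IH'.
    destruct (derives_inL _ _ _ _ IH') as [Hp [Ha [HC HbL]]].
    destruct (derives_inL _ _ _ _ Hx) as [_ [Hc HD]].
    simpl.
    apply d_cut with (Dia a (And (And C (big_and L)) (Dia c D))).
    + apply d_cut with (And (Dia a (And C (big_and L))) (Dia c D)).
      * apply d_andI; auto.
      * apply d_J; auto; simpl; tauto.
    + apply d_mon; auto.
      apply d_andI.
      * apply d_cut with (And C (big_and L)); apply d_andl; simpl; tauto.
      * apply d_andI.
        -- apply d_andr; simpl; tauto.
        -- apply d_cut with (And C (big_and L)); [apply d_andl | apply d_andr]; simpl; tauto.
Qed.

Definition lowb (a : modal) (u : formula) : bool :=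
  match u with
  | Dia c _ => match c, a with
               | Fin m, Fin n => Nat.ltb m n
               | Fin _, Omega => true
               | Omega, _ => false
               end
  | _ => false
  end.

Lemma lowb_spec a u : lowb a u = true -> exists c D, u = Dia c D /\ mlt c a.
Proof.
  destruct u; simpl; try discriminate. intros H. exists a0, u; split; auto.
  destruct a0, a; simpl in *; try discriminate; auto. apply Nat.ltb_lt; auto.
Qed.

Lemma lowb_intro c a D : mlt c a -> lowb a (Dia c D) = true.
Proof. destruct c, a; simpl; intros H; try contradiction; auto. apply Nat.ltb_lt; auto. Qed.

Lemma truth w S sig
  (Hsig : forall u, In u sig -> inL S u)
  (Hcl : forall u, In u sig -> closed_prop sig u) :
  forall u, In u sig -> forall T : Wt sig, good w S sig T ->
    (forces (Rel w S sig) (Val sig) T u <-> mem sig T u).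
Proof.
  induction u as [p| |u1 IH1 u2 IH2|a u IH]; intros Hin T gT; simpl.
  - unfold Val; tauto.
  - split; auto. intros _. destruct gT as [psi [Hpsi H]]. apply H; auto. apply d_top; auto.
  - destruct (Hcl _ Hin) as [H1 H2]. rewrite IH1, IH2 by auto.
    pose proof gT as [psi [Hpsi H]]. rewrite !H by auto.
    pose proof (Hsig _ Hin) as HL.
    split; [intros [d1 d2]; apply d_andI; auto|].
    intros D; split; eapply d_cut; eauto; [apply d_andl|apply d_andr]; auto.
  - pose proof (Hcl _ Hin) as Hu. simpl in Hu.
    pose proof (Hsig _ Hin) as HL. destruct HL as [Ha HLu].
    split.
    + intros [U [RU fU]]. destruct RU as [_ [gU [A1 _]]].
      apply A1; [right; reflexivity | exact Hin | left; apply IH; auto].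
    + intros Hm. pose proof gT as [psi [Hpsi H]].
      set (L := filter (lowb a) (set_of sig (proj1_sig T))).
      assert (HLin : forall x, In x L -> In x (set_of sig (proj1_sig T)) /\ lowb a x = true)
        by (intros x; unfold L; rewrite filter_In; tauto).
      set (psi' := And u (big_and L)).
      assert (Hpsi' : inL S psi').
      { unfold psi'; simpl; split; auto. apply inL_big_and. intros x Hx.
        apply Hsig. eapply set_of_incl. apply (HLin x Hx). }
      destruct (exists_set sig (fun v => derives w S psi' v)) as [t [Ht Hmem]].
      set (U := exist (fun t => length t = length sig) t Ht : Wt sig).
      assert (memU : forall v, mem sig U v <-> In v sig /\ derives w S psi' v)
        by (intros v; unfold mem; simpl; apply Hmem).
      assert (gU : good w S sig U).
      { exists psi'; split; auto. intros v Hv. rewrite memU. tauto. }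
      assert (Hkey : derives w S psi (Dia a psi')).
      { unfold psi'. apply jstar.
        - apply H; auto.
        - intros x Hx. destruct (HLin x Hx) as [Hx1 Hx2]. split.
          + apply H; [eapply set_of_incl; eauto | exact Hx1].
          + apply lowb_spec; auto. }
      exists U. split.
      * repeat split; auto.
        -- intros c C Hle HinC HmC. apply H; auto.
           destruct (Hsig _ HinC) as [Hc HC].
           destruct HmC as [HmC|HmC]; apply memU in HmC; destruct HmC as [_ HmC].
           ++ assert (D1 : derives w S psi (Dia a C))
                by (eapply d_cut; [exact Hkey| apply d_mon; auto]).
              destruct Hle as [Hlt|Heq]; [|subst; exact D1].
              eapply d_cut; [exact D1|]. apply d_RC; auto. simpl; auto.
           ++ eapply d_cut; [eapply d_cut; [exact Hkey| apply d_mon; [auto|exact HmC]]|].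
              apply d_ab; auto. simpl; auto.
        -- intros c C Hlt HmT. apply memU. split; [eapply mem_in; eauto|].
           assert (HinL : In (Dia c C) L)
             by (unfold L; apply filter_In; split; auto; apply lowb_intro; auto).
           apply d_cut with (big_and L).
           ++ apply d_andr. exact Hpsi'.
           ++ apply big_and_mem; auto. simpl in Hpsi'; tauto.
        -- intros Hw Ho p Hp. subst a. apply memU in Hp. destruct Hp as [Hps Hp].
           apply H; auto. eapply d_cut; [eapply d_cut; [exact Hkey| apply d_mon; [auto|exact Hp]]|].
           apply d_omega; auto. simpl; auto.
      * apply IH; auto. apply memU. split; auto. apply d_andl. exact Hpsi'.
Qed.

Lemma completeness w S A B :
  inL S A -> inL S B -> valid_finite_RC w S A B -> derives w S A B.
Proof.
  intros HA HB Hv.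
  set (sig := sub A ++ sub B).
  assert (Hsig : forall u, In u sig -> inL S u).
  { intros u Hu. apply in_app_or in Hu. destruct Hu as [Hu|Hu]; [exact (sub_inL S A u HA Hu) | exact (sub_inL S B u HB Hu)]. }
  assert (Hcl : forall u, In u sig -> closed_prop sig u).
  { intros u Hu. apply in_app_or in Hu. destruct Hu as [Hu|Hu];
      pose proof (sub_closed _ _ Hu) as Hc; destruct u; simpl in *; auto;
      try (destruct Hc; split); apply in_or_app; auto. }
  assert (HAs : In A sig) by (apply in_or_app; left; apply sub_refl).
  assert (HBs : In B sig) by (apply in_or_app; right; apply sub_refl).
  destruct (exists_set sig (fun v => derives w S A v)) as [t [Ht Hm]].
  set (T := exist (fun t => length t = length sig) t Ht : Wt sig).
  assert (memT : forall v, mem sig T v <-> In v sig /\ derives w S A v)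
    by (intros v; unfold mem; simpl; apply Hm).
  assert (gT : good w S sig T).
  { exists A; split; auto. intros v Hv'. rewrite memT. tauto. }
  assert (HfA : forces (Rel w S sig) (Val sig) T A).
  { apply truth; auto. apply memT. split; auto. apply d_refl; auto. }
  specialize (Hv (Wt sig) (Rel w S sig) (Val sig) (inhabits T) (Wt_finite sig)
                 (frame w S sig)).
  assert (HP : w = true -> persistent S (Rel w S sig) (Val sig)).
  { intros Hw HO p x y Hp Rxy. destruct Rxy as [_ [_ [_ [_ O]]]]. apply O; auto. }
  specialize (Hv HP T HfA).
  apply (truth w S sig Hsig Hcl B HBs T gT) in Hv. apply memT in Hv. tauto.
Qed.

Theorem corollary4p3 (S : list modal) (A B : formula) :
  inL S A -> inL S B ->
  (derives false S A B <-> valid_finite_RC false S A B) /\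
  (derives true S A B <-> valid_finite_RC true S A B).
Proof.
  intros HA HB. split; split; try apply soundness; apply completeness; auto.
Qed.
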